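(* Consider $n$ single photons, one in each of $n$ modes, whose joint state is $\rho^{\otimes n}$ where each photon's state is $\rho=(1-\epsilon)\rho_{\mathrm{id}}+\epsilon\rho_{\mathrm{dist}}$ in the orthogonal-bad-bit model. Then the probability of obtaining a valid pattern after the $n$-mode Fourier interferometer followed by photon-number-resolving detection is $$\Big(1-\frac1n\Big)(1-\epsilon)^n+\frac1n.$$
   Context: Orthogonal-bad-bit (OBB) model: with probability $1-\epsilon$ a photon is in a fixed common internal state ($\rho_{\mathrm{id}}$, identical for all photons), and with probability $\epsilon$ it is in an internal state ($\rho_{\mathrm{dist}}$) orthogonal to the internal states of all other photons. Modes are labelled $0,\dots,n-1$; the Fourier interferometer acts on external modes only via $\hat a_r^\dagger[\xi]\mapsto\frac1{\sqrt n}\sum_{j=0}^{n-1}\omega^{-rj}\hat a_j^\dagger[\xi]$, $\omega=e^{2\pi i/n}$, where $\hat a_i^\dagger[\xi]$ creates a photon in mode $i$ with internal state $\xi$. Detectors resolve photon number per external mode but not internal states. A pattern $(s_0,\dots,s_{n-1})$ is valid if $\sum_i i\,s_i\equiv0\pmod n$. *)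

(* Defs.v *)
From HB Require Import structures.
From mathcomp Require Import all_boot all_order all_algebra.
From mathcomp Require Import reals trigo.
From mathcomp Require Import complex.
Set Implicit Arguments. Unset Strict Implicit. Unset Printing Implicit Defensive.
Import Order.TTheory GRing.Theory Num.Theory.
Local Open Scope ring_scope.
Local Open Scope complex_scope.

Section OBB.
Variables (R : realType) (n : nat).

Definition omega : R[i] :=
  Complex (cos (2 * pi / n%:R)) (sin (2 * pi / n%:R)).

(* Fourier interferometer: a_r^dag[xi] |-> 1/sqrt n sum_j omega^{-rj} a_j^dag[xi];
   U j r is the amplitude from input mode r to output mode j. *)
Definition fourierU (j r : 'I_n) : R[i] :=
  ((Num.sqrt (n%:R : R))^-1)%:C * omega ^- (r * j).

(* Internal-state labels of the photons (orthonormal internal basis states):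
   for a set S of "bad" photons, photon k (input in mode k) has the common
   internal state xi_0 (rho_id) if k \notin S, and the private internal state
   xi_{k+1}, orthogonal to all others, if k \in S. *)
Definition label (S : {set 'I_n}) (k : 'I_n) : 'I_n.+1 :=
  if k \in S then lift ord0 k else ord0.

(* Fock occupation numbers (output mode, internal label) produced by sending
   photon k to output mode f k. *)
Definition occ (S : {set 'I_n}) (f : {ffun 'I_n -> 'I_n}) :
  {ffun 'I_n * 'I_n.+1 -> nat} :=
  [ffun p => #|[set k | (f k == p.1) && (label S k == p.2)]|].

(* Expanding prod_k (sum_j U_{j,k} a_j^dag[xi_{label k}]) |0>, the output Fock
   state |m> has amplitude sqrt(prod m!) * amp S m. *)
Definition amp (S : {set 'I_n}) (m : {ffun 'I_n * 'I_n.+1 -> nat}) : R[i] :=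
  \sum_(f : {ffun 'I_n -> 'I_n} | occ S f == m) \prod_(k < n) fourierU (f k) k.

Definition fockweight (m : {ffun 'I_n * 'I_n.+1 -> nat}) : R :=
  \prod_(p : 'I_n * 'I_n.+1) ((m p)`!)%:R.

Definition normsq (z : R[i]) : R := (complex.Re z) ^+ 2 + (complex.Im z) ^+ 2.

(* detectors resolve photon number per external mode only *)
Definition pattern (m : {ffun 'I_n * 'I_n.+1 -> nat}) (j : 'I_n) : nat :=
  \sum_(l < n.+1) m (j, l).

Definition valid_pattern (s : 'I_n -> nat) : bool :=
  ((\sum_(i < n) i * s i) %% n == 0)%N.

Definition prob_valid_pure (S : {set 'I_n}) : R :=
  \sum_(m <- undup [seq occ S f | f <- enum {: {ffun 'I_n -> 'I_n}}]
         | valid_pattern (pattern m))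
     fockweight m * normsq (amp S m).

(* rho^{(x) n} with rho = (1-eps) rho_id + eps rho_dist: mixture over the
   set S of photons in the distinguishable state. *)
Definition prob_valid_OBB (eps : R) : R :=
  \sum_(S : {set 'I_n}) eps ^+ #|S| * (1 - eps) ^+ (n - #|S|) * prob_valid_pure S.

End OBB.

(* Main.v *)
Require Import Defs.
From HB Require Import structures.
From mathcomp Require Import all_boot all_order all_algebra all_fingroup.
From mathcomp Require Import reals trigo complex.
From mathcomp Require Import ring lra.
Import Order.TTheory GRing.Theory Num.Theory.
Local Open Scope ring_scope.
Local Open Scope complex_scope.

Section Count.
Local Open Scope nat_scope.
Variables (T P : finType).

Definition cls (A : {set T}) (key : T -> P) (p : P) := #|[set k in A | key k == p]|.
Definition cntset (A : {set T}) (key1 key2 : T -> P) :=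
  [set s : {perm T} | perm_on A s && [forall k, key1 (s k) == key2 k]].

Lemma perm_onS' (A B : {set T}) (s : {perm T}) : B \subset A -> perm_on B s -> perm_on A s.
Proof. by move=> BA sB; apply: subset_trans sB BA. Qed.

Lemma cls_D1 (A : {set T}) (key : T -> P) (x : T) (p : P) : x \in A -> cls A key p = (key x == p) + cls (A :\ x) key p.
Proof.
move=> xA; rewrite /cls (cardsD1 x [set k in A | key k == p]) !inE xA /=; congr (_ + _).
by apply: eq_card => k; rewrite !inE andbA.
Qed.

Lemma cls_D1' (A : {set T}) (key : T -> P) (x : T) (p : P) : x \in A ->
  cls (A :\ x) key p = cls A key p - (key x == p).
Proof. by move=> xA; rewrite (cls_D1 _ key _ p xA) addKn. Qed.

Lemma cls_perm (A : {set T}) (key : T -> P) (t : {perm T}) (p : P) : perm_on A t -> cls A (key \o t) p = cls A key p.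
Proof.
move=> tA; rewrite /cls -[RHS](card_preimset _ (@perm_inj _ t)); apply: eq_card => k.
by rewrite !inE (perm_closed _ tA).
Qed.

Lemma cnt0 (A : {set T}) (key1 key2 : T -> P) : A = set0 -> (forall x, x \notin A -> key1 x = key2 x) ->
  #|cntset A key1 key2| = \prod_p (cls A key1 p)`!.
Proof.
move=> -> hk; rewrite big1; last by move=> p _; rewrite /cls (_ : [set _ in _ | _] = set0) ?cards0 //;
  apply/setP => k; rewrite !inE.
rewrite -(cards1 (1%g : {perm T})); apply: eq_card => s; rewrite !inE.
apply/andP/eqP => [[s0 _]|->].
  by apply/permP => x; rewrite perm1 (out_perm s0) // inE.
split; first exact: perm_on1.
by apply/forallP => k; rewrite perm1 hk // inE.
Qed.

Lemma cnt_eq k : forall (A : {set T}) (key1 key2 : T -> P), #|A| <= k ->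
  (forall x, x \notin A -> key1 x = key2 x) -> (forall p, cls A key1 p = cls A key2 p) ->
  #|cntset A key1 key2| = \prod_p (cls A key1 p)`!.
Proof.
elim: k => [|k IH] A key1 key2 Ak hout hcl.
  by apply: cnt0 => //; apply: cards0_eq; move: Ak; rewrite leqn0 => /eqP.
have [A0|/set0Pn[x xA]] := eqVneq A set0; first exact: cnt0.
set q := key2 x.
set M := \prod_p (cls A key1 p - (q == p))`!.
have Hy : forall y, \sum_(s in cntset A key1 key2 | s x == y) 1 =
    if (y \in A) && (key1 y == q) then M else 0.
  move=> y; case: ifP => [/andP[yA /eqP ky]|hy]; last first.
    apply: big_pred0 => s; apply/negP; rewrite inE => /andP[/andP[sA /forallP sk] /eqP sxy].
    by move: hy; rewrite -sxy (perm_closed _ sA) xA (eqP (sk x)) eqxx.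
  set t := tperm x y.
  have tA : perm_on A t.
    by apply: perm_onS' (tperm_on x y); apply/subsetP => z; rewrite !inE => /orP[]/eqP->.
  rewrite (reindex_inj (mulIg t)) /=.
  set key1' := key1 \o t.
  have -> : M = \prod_p (cls (A :\ x) key1' p)`!.
    apply: eq_bigr => p _; congr (_`!).
    by rewrite cls_D1' // cls_perm // /key1' /= /t tpermL ky.
  rewrite -(IH (A :\ x) key1' key2).
  - rewrite sum1_card; apply: eq_card => s; rewrite unfold_in /= !inE permM.
    set F1 := [forall _, _]; set F2 := [forall _, _].
    have -> : F1 = F2 by apply: eq_forallb => z; rewrite permM.
    case: F2; rewrite ?andbF ?andbT //.
    apply/andP/idP => [[sA /eqP tsx]|sA'].
      have sx : s x = x by apply: (@perm_inj _ t); rewrite tsx /t tpermL.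
      apply/subsetP => z; rewrite !inE => szz; apply/andP; split.
        by apply: contraNneq szz => ->; rewrite sx.
      apply: contraR szz => zA.
      have zx : x != z by apply: contraNneq zA => <-.
      have zy : y != z by apply: contraNneq zA => <-.
      have := out_perm sA zA; rewrite permM => e.
      by rewrite -(tpermK x y (s z)) -/t e /t tpermD.
    have sx : s x = x by apply: (out_perm sA'); rewrite !inE eqxx.
    split; last by rewrite sx /t tpermL.
    apply: perm_onM tA; apply: perm_onS' sA'; exact: subsetDl.
  - by move: Ak; rewrite (cardsD1 x) xA.
  - move=> z; rewrite !inE negb_and negbK => /orP[/eqP->|zA].
      by rewrite /key1' /= /t tpermL ky.
    have zx : x != z by apply: contraNneq zA => <-.
    have zy : y != z by apply: contraNneq zA => <-.
    by rewrite /key1' /= /t tpermD // hout.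
  - by move=> p; rewrite !cls_D1' // cls_perm // hcl /key1' /= /t tpermL ky.
rewrite -sum1_card (partition_big (fun s : {perm T} => s x) predT) //=.
under eq_bigr do rewrite Hy.
rewrite -big_mkcond /= (eq_bigl (fun y => y \in [set y in A | key1 y == q])); last by move=> y; rewrite inE.
rewrite sum_nat_const -/(cls A key1 q) /M.
have : 0 < cls A key1 q by rewrite hcl (cls_D1 _ _ _ _ xA) eqxx.
case E : (cls A key1 q) => [//|c] _.
rewrite (bigD1 q) //= [in RHS](bigD1 q) //= E eqxx subn1 /= factS mulnA; congr (_ * _).
by apply: eq_bigr => p pq; rewrite eq_sym (negbTE pq) subn0.
Qed.
Lemma cnt_ne (key1 key2 : T -> P) (s : {perm T}) :
  (forall k, key1 (s k) = key2 k) -> forall p, cls setT key1 p = cls setT key2 p.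
Proof.
move=> h p; rewrite /cls -[LHS](card_preimset _ (@perm_inj _ s)); apply: eq_card => k.
by rewrite !inE h.
Qed.
End Count.
Arguments cls {T P}.
Arguments cntset {T P}.
Arguments cnt_eq {T P}.
Arguments cnt_ne {T P}.

Section S.
Variables (R : realType) (n' : nat).
Local Notation N := n'.+1.
Local Notation w := (omega R N).
Local Notation th := (2 * pi / N%:R : R).

Lemma mulC (a b c d : R) : (a +i* b) * (c +i* d) = (a * c - b * d) +i* (a * d + b * c).
Proof. by []. Qed.

Lemma N1neq0 : 1 + n'%:R != 0 :> R.
Proof. by rewrite -[1 + _](natrD R 1 n') pnatr_eq0. Qed.

Lemma cisX (t : R) k : (cos t +i* sin t) ^+ k = (cos (t *+ k)) +i* (sin (t *+ k)).
Proof.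
elim: k => [|k IH]; first by rewrite expr0 mulr0n cos0 sin0.
rewrite exprS IH mulC [t *+ k.+1]mulrS cosD sinD; congr (_ +i* _).
by rewrite addrC mulrC.
Qed.

Lemma omegaX k : w ^+ k = (cos (th *+ k)) +i* (sin (th *+ k)).
Proof. exact: cisX. Qed.

Lemma omegaN : w ^+ N = 1.
Proof.
rewrite omegaX; have -> : th *+ N = pi *+ 2.
  rewrite -mulr_natr -[pi *+ 2]mulr_natr; field.
  by rewrite -[1 + _](natrD R 1 n') pnatr_eq0.
by rewrite cos2pi sin2pi.
Qed.

Lemma omega_neq1 k : (0 < k < N)%N -> w ^+ k != 1.
Proof.
move=> /andP[k0 kN]; rewrite omegaX; apply/negP => /eqP[] + _.
have -> : th *+ k = ((pi : R) * k%:R / N%:R) *+ 2.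
  by rewrite -mulr_natr -mulr_natl; field; exact: N1neq0.
rewrite cos_mulr2n cos2sin2.
have hs : 0 < sin ((pi : R) * k%:R / N%:R).
  apply: sin_gt0_pi; apply/andP; split.
    by apply: divr_gt0; [apply: mulr_gt0; [apply: pi_gt0|rewrite ltr0n]|rewrite ltr0n].
  by rewrite ltr_pdivrMr ?ltr0n // ltr_pM2l ?pi_gt0 // ltr_nat.
move: hs; set s := sin _ => hs h.
have : s ^+ 2 *+ 2 = 0 by move: h; rewrite !mulr2n; lra.
by move/eqP; rewrite mulrn_eq0 /= expf_eq0 /= (gt_eqF hs).
Qed.

Lemma conjcM' (x y : R[i]) : conjc (x * y) = conjc x * conjc y.
Proof. exact: rmorphM. Qed.
Lemma conjcX' (x : R[i]) e : conjc (x ^+ e) = conjc x ^+ e.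
Proof. exact: rmorphXn. Qed.
Lemma conjc_sum' (I : finType) (P : pred I) (F : I -> R[i]) :
  conjc (\sum_(i | P i) F i) = \sum_(i | P i) conjc (F i).
Proof. exact: rmorph_sum. Qed.
Lemma conjc_prod' (I : finType) (P : pred I) (F : I -> R[i]) :
  conjc (\prod_(i | P i) F i) = \prod_(i | P i) conjc (F i).
Proof. exact: rmorph_prod. Qed.

Lemma conjc_prodT (I : finType) (F : I -> R[i]) :
  conjc (\prod_i F i) = \prod_i conjc (F i).
Proof. exact: rmorph_prod. Qed.
Lemma conjc_sumT (I : finType) (P : pred I) (F : I -> R[i]) :
  conjc (\sum_(i | P i) F i) = \sum_(i | P i) conjc (F i).
Proof. exact: rmorph_sum. Qed.

Lemma omega_neq0 : w != 0.
Proof. by apply/negP => /eqP w0; move: omegaN; rewrite w0 expr0n /= => /eqP; rewrite eq_sym oner_eq0. Qed.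

Lemma omega_inj a b : (a < N)%N -> (b < N)%N -> w ^+ a = w ^+ b -> a = b.
Proof.
wlog ab : a b / (a <= b)%N.
  move=> H aN bN e; case: (leqP a b) => [h|h]; first exact: H.
  by symmetry; apply: H => //; apply: ltnW.
move=> aN bN; rewrite -(subnKC ab) exprD => e.
have : w ^+ (b - a) = 1.
  by apply: (mulfI (expf_neq0 a omega_neq0)); rewrite mulr1 -e.
move=> e1; case: (posnP (b - a)) => [->|h]; first by rewrite addn0.
have : (0 < b - a < N)%N by rewrite h /= (leq_ltn_trans (leq_subr _ _) bN).
by move/omega_neq1; rewrite e1 eqxx.
Qed.

Lemma omega_mod e : w ^+ (e %% N) = w ^+ e.
Proof. exact: expr_mod omegaN. Qed.

Lemma omega_eq e1 e2 : (w ^+ e1 == w ^+ e2) = (e1 %% N == e2 %% N)%N.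
Proof.
rewrite -omega_mod -(omega_mod e2); apply/eqP/eqP => [h|->//].
by apply: omega_inj => //; apply: ltn_pmod.
Qed.

Lemma omega_conj : conjc w = w ^+ n'.
Proof.
apply: (mulfI omega_neq0); rewrite -exprS omegaN /omega /conjc mulC.
apply/eqP; rewrite eq_complex /=; have := cos2Dsin2 (th).
set c := cos _; set s := sin _ => h.
by apply/andP; split; apply/eqP; rewrite -?h; ring.
Qed.

Lemma geom (x : R[i]) : x ^+ N = 1 -> \sum_(j < N) x ^+ j = if x == 1 then N%:R else 0.
Proof.
move=> xN; case: eqP => [->|/eqP x1].
  by under eq_bigr do rewrite expr1n; rewrite sumr_const card_ord.
have : (x - 1) * \sum_(j < N) x ^+ j = 0 by rewrite -subrX1 xN subrr.
by move/eqP; rewrite mulf_eq0 subr_eq0 (negbTE x1) /= => /eqP.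
Qed.

Local Notation c := (((Num.sqrt (N%:R : R))^-1)%:C : R[i]).

Lemma cc : c * c * N%:R = 1.
Proof.
rewrite -rmorphM -invfM -expr2 sqr_sqrtr ?ler0n // -(rmorph_nat (real_complex R)) -rmorphM.
by rewrite mulVf ?pnatr_eq0.
Qed.

Lemma omega_conjV : conjc w = w^-1.
Proof. by rewrite omega_conj; apply: (mulfI omega_neq0); rewrite -exprS omegaN divff // omega_neq0. Qed.

Lemma conj_omegaV e : conjc (w ^- e) = w ^+ e.
Proof.
rewrite conjc_inv conjcX' omega_conjV.
by rewrite exprVn invrK.
Qed.

Lemma unitN_div (a b : R[i]) : a ^+ N = 1 -> b ^+ N = 1 -> (a / b) ^+ N = 1.
Proof. by move=> ha hb; rewrite exprMn exprVn ha hb invr1 mulr1. Qed.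

Lemma ortho (t : nat) (k m : 'I_N) :
  \sum_(j < N) w ^+ (t * j) * fourierU R j k * conjc (fourierU R j m) = (((t + m) %% N)%N == k)%:R.
Proof.
set x := w ^+ (t + m) / w ^+ k.
have E : forall j : 'I_N, w ^+ (t * j) * fourierU R j k * conjc (fourierU R j m) = c * c * x ^+ j.
  move=> j; rewrite /fourierU conjcM' conjc_real conj_omegaV /x.
  rewrite exprMn exprVn -!exprM mulnDl exprD.
  field; apply/andP; split; first exact: expf_neq0 _ omega_neq0.
  by rewrite fmorph_eq0 sqrtr_eq0 -ltNge ltr0n.
under eq_bigr do rewrite E; rewrite -mulr_sumr geom.
  have -> : (x == 1) = ((t + m) %% N == k)%N.
    have wk0 := expf_neq0 k omega_neq0.
    by rewrite /x -(inj_eq (mulIf wk0)) mul1r divfK // omega_eq (modn_small (ltn_ord k)).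
  by case: eqP; rewrite ?mulr0 // => _; exact: cc.
by rewrite /x; apply: unitN_div; rewrite -exprM mulnC exprM omegaN expr1n.
Qed.


Lemma valid_ind e : ((N %| e)%N%:R : R[i]) = N%:R^-1 * \sum_(t < N) w ^+ (t * e).
Proof.
under eq_bigr do rewrite mulnC exprM.
rewrite geom; last by rewrite -exprM mulnC exprM omegaN expr1n.
rewrite -(expr0 w) omega_eq mod0n /dvdn; case: eqP => _; rewrite ?mulr0 //.
by rewrite mulVf // pnatr_eq0.
Qed.


Lemma perm_onT (T : finType) (s : {perm T}) : perm_on setT s.
Proof. by apply/subsetP => x; rewrite inE. Qed.

Section Pure.
Variable S : {set 'I_N}.

Definition Af (f : {ffun 'I_N -> 'I_N}) : R[i] := \prod_(k < N) fourierU R (f k) k.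
Definition Gs : {set {perm 'I_N}} := [set s : {perm 'I_N} | [forall k, label S (s k) == label S k]].
Definition fcomp (f : {ffun 'I_N -> 'I_N}) (s : {perm 'I_N}) : {ffun 'I_N -> 'I_N} := [ffun k => f (s k)].
Definition Wt (m : {ffun 'I_N * 'I_N.+1 -> nat}) : nat := (\prod_p (m p)`!)%N.

Lemma occ_cls f p : occ S f p = cls setT (fun k => (f k, label S k)) p.
Proof. by rewrite /occ ffunE /cls; apply: eq_card => k; rewrite !inE; case: p. Qed.

Lemma stab_count f g : #|[set s in Gs | fcomp f s == g]| =
  if occ S g == occ S f then Wt (occ S f) else 0%N.
Proof.
set key1 := fun k => (f k, label S k); set key2 := fun k => (g k, label S k).
have E : [set s in Gs | fcomp f s == g] = cntset setT key1 key2.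
  apply/setP => s; rewrite !inE perm_onT /=.
  apply/andP/forallP => [[/forallP h /eqP ge] k|h].
    by rewrite /key1 /key2 -ge ffunE (eqP (h k)) eqxx.
  split; first by apply/forallP => k; have /eqP[_ ->] := h k.
  by apply/eqP/ffunP => k; rewrite ffunE; have /eqP[-> _] := h k.
case: eqP => [e|ne].
  rewrite E (cnt_eq #|[set: 'I_N]|) //.
    by rewrite /Wt; apply: eq_bigr => p _; rewrite occ_cls.
    by move=> x; rewrite inE.
  by move=> p; rewrite /key1 /key2 -!occ_cls e.
apply/eqP; rewrite cards_eq0; apply/eqP/setP => s; rewrite E !inE perm_onT /=.
apply/negP => /forallP h; apply: ne; apply/ffunP => p; rewrite !occ_cls -/key1 -/key2.
by symmetry; apply: (cnt_ne _ _ s) => k; apply/eqP.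
Qed.

Lemma wick f (Y : {ffun 'I_N -> 'I_N} -> R[i]) :
  (Wt (occ S f))%:R * \sum_(g | occ S g == occ S f) Y g = \sum_(s in Gs) Y (fcomp f s).
Proof.
transitivity (\sum_(s in Gs) \sum_(g | fcomp f s == g) Y g).
  rewrite (exchange_big_dep predT) //= mulr_sumr big_mkcond /=; apply: eq_bigr => g _.
  rewrite (eq_bigl (fun s => s \in [set s in Gs | fcomp f s == g])); last by move=> s; rewrite !inE.
  by rewrite sumr_const stab_count; case: eqP => _; rewrite ?mul0r // mulr_natl.
by apply: eq_bigr => s _; rewrite (big_pred1 (fcomp f s)) // => g; rewrite eq_sym.
Qed.


Lemma normsqC (z : R[i]) : (normsq z)%:C = z * conjc z.
Proof.
case: z => a b; apply/eqP; rewrite eq_complex /normsq /=.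
by apply/andP; split; apply/eqP; ring.
Qed.

Lemma part_undup (T : finType) (M : eqType) (h : T -> M) (Pm : pred M) (F : T -> R[i]) :
  \sum_(m <- undup [seq h f | f <- enum {: T}] | Pm m) \sum_(f | h f == m) F f =
  \sum_(f | Pm (h f)) F f.
Proof.
rewrite (exchange_big_dep predT) //= [RHS]big_mkcond /=; apply: eq_bigr => f _.
rewrite big_mkcond (bigD1_seq (h f)) /=; last exact: undup_uniq.
  rewrite eqxx andbT big1 ?addr0 // => m mh.
  by rewrite eq_sym (negbTE mh) andbF.
by rewrite mem_undup; apply: map_f; rewrite mem_enum.
Qed.

Lemma pattern_occ (f : {ffun 'I_N -> 'I_N}) :
  valid_pattern (pattern (occ S f)) = (N %| \sum_(k < N) f k)%N.
Proof.
rewrite /valid_pattern /dvdn; congr (_ %% _ == _)%N.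
have E : forall j, pattern (occ S f) j = (\sum_(k < N) (f k == j))%N.
  move=> j; rewrite /pattern.
  under eq_bigr do rewrite ffunE /= -sum1_card big_mkcond /=.
  rewrite exchange_big /=; apply: eq_bigr => k _.
  under eq_bigr do rewrite inE.
  case: (f k == j) => /=; last by rewrite big1.
  rewrite (bigD1 (label S k)) //= eqxx big1 // => l lk.
  by rewrite eq_sym (negbTE lk).
under eq_bigr do rewrite E big_distrr /=.
rewrite exchange_big /=; apply: eq_bigr => k _.
rewrite (bigD1 (f k)) //= eqxx muln1 big1 ?addn0 // => j jk.
by rewrite eq_sym (negbTE jk) muln0.
Qed.


Lemma CM (a b : R) : (a * b)%:C = a%:C * b%:C.
Proof. exact: rmorphM. Qed.

Lemma Cnat k : (k%:R : R)%:C = k%:R.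
Proof. exact: rmorph_nat. Qed.

Lemma pvp_C : (prob_valid_pure R S)%:C =
  \sum_(f : {ffun 'I_N -> 'I_N} | (N %| \sum_(k < N) f k)%N) Af f * ((Wt (occ S f))%:R * conjc (amp R S (occ S f))).
Proof.
rewrite /prob_valid_pure rmorph_sum /=.
rewrite (eq_bigl (fun f : {ffun 'I_N -> 'I_N} => valid_pattern (pattern (occ S f)))); last by move=> f; rewrite pattern_occ.
rewrite -(@part_undup _ _ (occ S) (fun m => valid_pattern (pattern m))).
apply: eq_bigr => m _.
rewrite (eq_bigr (fun f : {ffun 'I_N -> 'I_N} => Af f * ((Wt m)%:R * conjc (amp R S m)))); last first.
  by move=> f /eqP ->.
rewrite -mulr_suml CM normsqC /fockweight -natr_prod -/(Wt m) Cnat mulrCA.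
by [].
Qed.


Lemma inner (t : nat) (s : {perm 'I_N}) :
  \sum_(f : {ffun 'I_N -> 'I_N}) w ^+ (t * \sum_(k < N) f k) * Af f * conjc (Af (fcomp f s))
   = \prod_(k < N) (((t + (s^-1)%g k) %% N)%N == k)%:R.
Proof.
under [RHS]eq_bigr do rewrite -ortho.
rewrite bigA_distr_bigA /=; apply: eq_bigr => f _.
rewrite big_split big_split; congr (_ * _ * _).
  by rewrite big_distrr /= expr_sum.
rewrite /Af conjc_prodT (reindex_inj (@perm_inj _ (s^-1)%g)) /=.
by apply: eq_bigr => k _; rewrite ffunE permKV.
Qed.


Lemma pvp_eval : (prob_valid_pure R S)%:C = N%:R^-1 *
  \sum_(s in Gs) \sum_(t < N) \prod_(k < N) (((t + (s^-1)%g k) %% N)%N == k)%:R.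
Proof.
rewrite pvp_C.
transitivity (N%:R^-1 * \sum_(f : {ffun 'I_N -> 'I_N}) \sum_(t < N) \sum_(s in Gs)
   w ^+ (t * \sum_(k < N) f k) * Af f * conjc (Af (fcomp f s))).
  rewrite big_mkcond mulr_sumr; apply: eq_bigr => f _.
  rewrite /amp conjc_sumT wick.
  rewrite -[if _ then _ else _]/(if (N %| \sum_(k < N) f k)%N then _ else _).
  have -> : forall (b : bool) (x : R[i]), (if b then x else 0) = b%:R * x.
    by move=> [] x; rewrite ?mul1r ?mul0r.
  rewrite valid_ind -mulrA; congr (_ * _); rewrite mulr_suml; apply: eq_bigr => t _.
  by rewrite mulrA mulr_sumr; apply: eq_bigr => s _.
congr (_ * _).
rewrite exchange_big; under eq_bigr do rewrite exchange_big.
rewrite exchange_big; apply: eq_bigr => s _; apply: eq_bigr => t _.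
exact: inner.
Qed.


End Pure.

Lemma zp_val (a b : 'I_N) : val (a + b)%R = ((a + b) %% N)%N.
Proof. by []. Qed.

Lemma zp_cond (t k j : 'I_N) : (((t + j) %% N)%N == k) = ((t + j)%R == k).
Proof. by rewrite -zp_val. Qed.

Lemma prod_bool (I : finType) (b : pred I) : \prod_i ((b i)%:R : R[i]) = ([forall i, b i])%:R.
Proof.
case: forallP => [h|/forallP]; first by rewrite big1 // => i _; rewrite h.
rewrite negb_forall => /existsP[i /negbTE bi].
by rewrite (bigD1 i) //= bi mul0r.
Qed.

Lemma Gs0 : Gs set0 = [set: {perm 'I_N}].
Proof.
by apply/setP => s; rewrite !inE; apply/forallP => k; rewrite /label !inE.
Qed.

Lemma pvp_empty : prob_valid_pure R (set0 : {set 'I_N}) = 1.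
Proof.
apply: (@complexI R); rewrite pvp_eval Gs0 exchange_big /=.
rewrite (eq_bigr (fun _ => 1)).
  by rewrite sumr_const card_ord -[1 *+ N]/(N%:R) mulVf ?pnatr_eq0.
move=> t _.
pose sh := perm (@addIr _ t).
rewrite (eq_bigr (fun s => (s == sh)%:R)); last first.
  move=> s _; rewrite prod_bool; congr (_%:R); congr (nat_of_bool _).
  apply/idP/eqP => [/forallP h|->].
    apply/permP => j; rewrite permE /=; move: (h (s j)); rewrite zp_cond permK addrC.
    by move/eqP.
  apply/forallP => k; rewrite zp_cond addrC; apply/eqP.
  have shE : forall x, sh x = x + t by move=> x; rewrite permE.
  by rewrite -shE permKV.
rewrite (bigD1 sh) ?inE //= eqxx big1 ?addr0 // => s /andP[_ /negbTE ->].
by [].  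
Qed.




Lemma CV (x : R) : (x^-1)%:C = (x%:C)^-1.
Proof. exact: fmorphV. Qed.

Lemma pvp_nonempty (S : {set 'I_N}) : S != set0 -> prob_valid_pure R S = N%:R^-1.
Proof.
case/set0Pn => k0 k0S.
apply: (@complexI R); rewrite pvp_eval CV Cnat.
rewrite [X in _ * X = _](_ : _ = 1) ?mulr1 //.
rewrite (eq_bigr (fun s => (s == 1%g)%:R)).
  rewrite (bigD1 1%g) /=; last by rewrite inE; apply/forallP => k; rewrite perm1.
  rewrite eqxx big1 ?addr0 // => s /andP[_ /negbTE ->]; by [].
move=> s sG.
have sk0 : (s^-1)%g k0 = k0.
  move: sG; rewrite inE => /forallP /(_ ((s^-1)%g k0)); rewrite permKV /label k0S.
  case: ifP => _ /eqP; first by move/lift_inj.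
  by move=> e; have := neq_lift ord0 k0; rewrite e eqxx.
rewrite (bigD1 ord0) //= [X in _ + X]big1 ?addr0.
  rewrite prod_bool; congr (_%:R); congr (nat_of_bool _).
  apply/idP/eqP => [/forallP h|->].
    apply/permP => k; rewrite perm1; move: (h (s k)); rewrite add0n permK modn_small //.
    by move/eqP/val_inj.
  by apply/forallP => k; rewrite invg1 perm1 add0n modn_small.
move=> t tne; rewrite (bigD1 k0) //= zp_cond sk0.
have -> : (t + k0 == k0)%R = false.
  apply/negbTE; apply: contra tne => /eqP e; apply/eqP; apply: (@addIr _ k0); rewrite e add0r.
  by [].
by rewrite mul0r.
Qed.

End S.

Lemma binom_sets (R : realType) (N : nat) (x y : R) :
  \sum_(S : {set 'I_N}) x ^+ #|S| * y ^+ (N - #|S|) = (x + y) ^+ N.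
Proof.
have E : forall S : {set 'I_N}, x ^+ #|S| * y ^+ (N - #|S|) = \prod_(k < N) (if k \in S then x else y).
  move=> S; rewrite (bigID (mem S)) /=; congr (_ * _).
    by rewrite (eq_bigr (fun _ => x)) ?prodr_const // => k ->.
  rewrite (eq_bigl (fun k => k \in ~: S)); last by move=> k; rewrite inE.
  rewrite (eq_bigr (fun _ => y)) ?prodr_const; last by move=> k; rewrite inE => /negbTE ->.
  have hc := cardsC S; rewrite card_ord in hc; congr (_ ^+ _); apply/eqP.
  have SN : (#|S| <= N)%N by apply: leq_trans (leq_addr #|~: S| _) _; rewrite hc.
  by rewrite -(eqn_add2l #|S|) hc subnKC.
under eq_bigr do rewrite E.
rewrite -[in RHS](card_ord N) -prodr_const [in RHS](eq_bigl xpredT) //.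
rewrite [in RHS](eq_bigr (fun k => \sum_(b : bool) if b then x else y)); last by move=> k _; rewrite big_bool.
rewrite bigA_distr_bigA /=.
rewrite (reindex (fun f : {ffun 'I_N -> bool} => [set k | f k])) /=; last first.
  exists (fun S : {set 'I_N} => [ffun k => k \in S]) => f _.
    by apply/ffunP => k; rewrite ffunE inE.
  by apply/setP => k; rewrite inE ffunE.
by apply: eq_bigr => f _; apply: eq_bigr => k _; rewrite inE.
Qed.

Theorem corollary1 (R : realType) (n : nat) (eps : R) :
  (0 < n)%N -> 0 <= eps <= 1 ->
  prob_valid_OBB n eps = (1 - n%:R^-1) * (1 - eps) ^+ n + n%:R^-1.
Proof.
case: n => [//|n'] _ _.
rewrite /prob_valid_OBB (bigD1 set0) //= pvp_empty cards0 expr0 mul1r subn0 mulr1.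
rewrite (eq_bigr (fun S : {set 'I_n'.+1} => eps ^+ #|S| * (1 - eps) ^+ (n'.+1 - #|S|) * n'.+1%:R^-1)); last first.
  by move=> S S0; rewrite pvp_nonempty.
rewrite -mulr_suml.
have := binom_sets R n'.+1 eps (1 - eps).
rewrite (bigD1 set0) //= cards0 expr0 mul1r subn0 subrKC expr1n => h.
have -> : \sum_(i : {set 'I_n'.+1} | i != set0) eps ^+ #|i| * (1 - eps) ^+ (n'.+1 - #|i|) = 1 - (1 - eps) ^+ n'.+1.
  by move: h; lra.
ring.
Qed.
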